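(* Let $(S,d)$ be a finite metric space partitioned into two disjoint groups $S=S_1\cup S_2$, let $k_1,k_2$ be nonnegative integers with $k=k_1+k_2$, and let $r^*$ be the optimal radius of the fair $k$-center problem. For $l\in\{1,2\}$ let $\Gamma_l\subseteq S_l$ be a $2r^*$-independent center set of $S_l$, with $|\Gamma_1|>k_1$ and $|\Gamma_2|>k_2$. Run Algorithm A (described in the context). For the $j$-th iteration of its while-loop, let $C^j$ and $\Gamma^j_l$ ($l=1,2$) denote the values of $C$ and of the current sets $\Gamma_l$ in that iteration. Then for every such $j$ and each $l\in\{1,2\}$: (1) $|\Gamma^j_l|\le k-|C^j|$; (2) $|C^j|\le k$; (3) $|C^j\cap S_l|\le k_l$.
   Context: Fair $k$-center: $C\subseteq S$ is feasible if $|C\cap S_l|\le k_l$ for each $l$; cost $\max_{s\in S}d(s,C)$, $d(s,C)=\min_{c\in C}d(s,c)$, $d(s,\emptyset)=\infty$; $r^*$ is the minimum cost over feasible $C$. For $T\subseteq S$, $\Gamma\subseteq T$ is a $\lambda$-independent center set of $T$ if distinct points of $\Gamma$ are at distance $>\lambda$ and every point of $T$ is within $\lambda$ of some point of $\Gamma$. Algorithm A (input $\Gamma_1,\Gamma_2$). Phase 1: $C\leftarrow\emptyset$; build the bipartite graph $G$ on vertex set $\Gamma_1\cup\Gamma_2$ where $p\in\Gamma_1$, $q\in\Gamma_2$ are adjacent iff $d(p,q)\le 3r^*$; for each degree-$0$ vertex $i$, if $d(C,i)>2r^*$ add $i$ to $C$; remove all degree-$0$ vertices from $G$ (throughout, the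 current $\Gamma_l$ means the vertices of $G$ that lie in the original $\Gamma_l$). Phase 2: while $|C|\le k$ and $G$ is nonempty: if $G$ has no vertex of degree $1$, pick an arbitrary edge, let $p$ be one of its endpoints (arbitrary) and $q$ the other, add $p$ to $C$ and delete $p$ and $q$ from $G$ (and from the current $\Gamma$ sets containing them); otherwise, pick a vertex $i$ of $G$ maximizing $|N_1(i)|$, where $N_1(i)$ is the set of degree-$1$ neighbours of $i$ in $G$, add $i$ to $C$ and delete $i$ and $N_1(i)$ from $G$ (and from the current $\Gamma$ sets). Then, if some $l\in\{1,2\}$ satisfies $|C\cap S_l|+|\Gamma_l|\le k_l$ (current $\Gamma_l$), set $C\leftarrow C\cup\Gamma_l$, let $\Gamma'_{3-l}=\{p\in\Gamma_{3-l}: d(p,C)>3r^*\}$ (current $\Gamma_{3-l}$), and return $C\cup\Gamma'_{3-l}$. If the loop ends without returning, output $C$. *)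

(* Defs.v *)
From mathcomp Require Import all_boot all_order all_algebra.
Set Implicit Arguments. Unset Strict Implicit. Unset Printing Implicit Defensive.
Import Order.TTheory GRing.Theory Num.Theory.
Local Open Scope ring_scope.

Section FairKCenter.
Variables (R : realFieldType) (T : finType) (d : T -> T -> R).

(* (T,d) is a (finite) metric space; the whole type T plays the role of S. *)
Definition metric : Prop :=
  [/\ forall x, d x x = 0,
      forall x y, d x y = 0 -> x = y,
      forall x y, d x y = d y x,
      forall x y, 0 <= d x y &
      forall x y z, d x z <= d x y + d y z].

Definition covers (C : {set T}) (r : R) : Prop :=
  forall s : T, exists2 c, c \in C & d s c <= r.

Definition fair_feasible (S1 S2 : {set T}) (k1 k2 : nat) (C : {set T}) : Prop :=
  (#|C :&: S1| <= k1)%N /\ (#|C :&: S2| <= k2)%N.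

Definition optimal_radius S1 S2 k1 k2 (r : R) : Prop :=
  (exists2 C, fair_feasible S1 S2 k1 k2 C & covers C r) /\
  (forall C r', fair_feasible S1 S2 k1 k2 C -> covers C r' -> r <= r').

Definition indep_center_set (lam : R) (A G : {set T}) : Prop :=
  [/\ G \subset A,
      {in G &, forall x y, x != y -> lam < d x y} &
      forall t, t \in A -> exists2 g, g \in G & d t g <= lam].

Variables (G1 G2 : {set T}) (r : R).

Definition adj (V : {set T}) (x y : T) : bool :=
  [&& x \in V, y \in V,
      (x \in G1) && (y \in G2) || (x \in G2) && (y \in G1) &
      d x y <= 3%:R * r].

Definition nbhd (V : {set T}) (x : T) : {set T} := [set y | adj V x y].
Definition deg (V : {set T}) (x : T) : nat := #|nbhd V x|.
Definition N1 (V : {set T}) (i : T) : {set T} :=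
  [set y in nbhd V i | deg V y == 1%N].

Definition V0 : {set T} := G1 :|: G2.
Definition isolated0 : {set T} := [set i in V0 | deg V0 i == 0%N].

Definition far (C : {set T}) (i : T) : bool := [forall c in C, 2%:R * r < d c i].

(* Phase 1, processing the degree-0 vertices in the order given by s. *)
Definition phase1_C (s : seq T) : {set T} :=
  foldl (fun C i => if far C i then i |: C else C) set0 s.
Definition phase1_V : {set T} := V0 :\: isolated0.

(* A state is (C, V) with V the vertex set of the current graph G;
   the current Gamma_l is V :&: G_l. *)
Definition guard (k : nat) (C V : {set T}) : bool := (#|C| <= k)%N && (V != set0).

(* One body step of the while-loop (before the return test), with all the
   arbitrary choices left nondeterministic. *)
Inductive step (C V : {set T}) : {set T} -> {set T} -> Prop :=
| step_edge p q :
    (forall v, v \in V -> deg V v != 1%N) -> adj V p q ->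
    step C V (p |: C) (V :\ p :\ q)
| step_deg1 i :
    (exists2 v, v \in V & deg V v == 1%N) -> i \in V ->
    (forall j, j \in V -> #|N1 V j| <= #|N1 V i|)%N ->
    step C V (i |: C) (V :\: (i |: N1 V i)).

Definition returns (S1 S2 : {set T}) (k1 k2 : nat) (C V : {set T}) : Prop :=
  (#|C :&: S1| + #|V :&: G1| <= k1)%N \/ (#|C :&: S2| + #|V :&: G2| <= k2)%N.

(* States (C,V) occurring in the loop, starting from the state (C0,V1) after Phase 1:
   the state at the start of each iteration, and the state after each loop body
   that did not return. *)
Inductive reachable (S1 S2 : {set T}) (k1 k2 : nat) (C0 V1 : {set T})
  : {set T} -> {set T} -> Prop :=
| reach0 : reachable S1 S2 k1 k2 C0 V1 C0 V1
| reachS C V C' V' :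
    reachable S1 S2 k1 k2 C0 V1 C V -> guard (k1 + k2) C V ->
    step C V C' V' -> ~ returns S1 S2 k1 k2 C' V' ->
    reachable S1 S2 k1 k2 C0 V1 C' V'.

End FairKCenter.

(* Main.v *)
Require Import Defs.
From mathcomp Require Import all_boot all_order all_algebra.
From mathcomp Require Import zify ring lra.
Import Order.TTheory GRing.Theory Num.Theory.
Local Open Scope ring_scope.

Lemma shrink (T : finType) (V V' G : {set T}) (a : T) :
  V' \subset V -> a \in V -> a \in G -> a \notin V' ->
  (#|V' :&: G| < #|V :&: G|)%N.
Proof.
move=> sV aV aG naV; apply: proper_card; apply/properP; split.
  exact: setSI.
by exists a; rewrite !inE ?aV ?aG // (negbTE naV).
Qed.

Arguments shrink {T V V' G a}.

Lemma card_disjU (T : finType) (A B : {set T}) :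
  (forall x, x \in A -> x \in B -> False) -> #|A :|: B| = (#|A| + #|B|)%N.
Proof.
move=> H; rewrite -cardsUI.
suff -> : A :&: B = set0 by rewrite cards0 addn0.
apply/setP=> x; rewrite !inE; apply/negP => /andP[xa xb]; exact: H xa xb.
Qed.

Lemma foldl_sub (R : realFieldType) (T : finType) (d : T -> T -> R) r
  (I : {set T}) (s : seq T) (C : {set T}) :
  C \subset I -> all (fun x => x \in I) s ->
  foldl (fun C i => if far d r C i then i |: C else C) C s \subset I.
Proof.
elim: s C => [|x s IH] C //= CI /andP[xI sI]; apply: IH => //.
case: ifP => // _; by rewrite subUset sub1set xI.
Qed.

Theorem lemma4 (R : realFieldType) (T : finType) (d : T -> T -> R)
  (S1 S2 : {set T}) (k1 k2 : nat) (rstar : R) (G1 G2 : {set T}) :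
  metric d ->
  S1 :&: S2 = set0 -> S1 :|: S2 = [set: T] ->
  optimal_radius d S1 S2 k1 k2 rstar ->
  indep_center_set d (2%:R * rstar) S1 G1 ->
  indep_center_set d (2%:R * rstar) S2 G2 ->
  (k1 < #|G1|)%N -> (k2 < #|G2|)%N ->
  forall s : seq T, perm_eq s (enum (isolated0 d G1 G2 rstar)) ->
  forall C V : {set T},
    reachable d G1 G2 rstar S1 S2 k1 k2
      (phase1_C d rstar s) (phase1_V d G1 G2 rstar) C V ->
    [/\ (#|V :&: G1| <= (k1 + k2) - #|C|)%N /\ (#|V :&: G2| <= (k1 + k2) - #|C|)%N,
        (#|C| <= k1 + k2)%N &
        (#|C :&: S1| <= k1)%N /\ (#|C :&: S2| <= k2)%N].
Proof.
move=> [d0 dpos_eq dsym dge0 dtri] S12 S1u [[Cs [Cs1 Cs2] covCs] _]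
  [G1S1 sep1 _] [G2S2 sep2 _] k1G1 k2G2 s perm_s C V reach.
have inS2 : forall x, (x \in S2) = (x \notin S1).
  move=> x; apply/idP/idP.
  - move=> x2; apply/negP=> x1.
    have: x \in S1 :&: S2 by rewrite inE x1 x2.
    by rewrite S12 inE.
  - move=> nx1; have: x \in S1 :|: S2 by rewrite S1u inE.
    by rewrite inE (negbTE nx1).
have cardC : forall X : {set T}, #|X| = (#|X :&: S1| + #|X :&: S2|)%N.
  move=> X; rewrite -(cardsID S1 X); congr (_ + _)%N; apply: eq_card => x.
  by rewrite !inE inS2 andbC.
have G12 : forall x, x \in G1 -> x \in G2 -> False.
  move=> x x1 x2; have h1 := subsetP G1S1 x x1; have h2 := subsetP G2S2 x x2.
  by move: h2; rewrite inS2 h1.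
have [g g1] : exists g, g \in G1.
  apply/set0Pn; rewrite -card_gt0; exact: leq_ltn_trans (leq0n k1) k1G1.
have r0 : 0 <= rstar.
  case: (covCs g) => c _ h; exact: le_trans (dge0 g c) h.
pose f x := odflt x [pick c in Cs | d x c <= rstar].
have fP : forall x, f x \in Cs /\ d x (f x) <= rstar.
  move=> x; rewrite /f; case: pickP => [c /andP[] //|/= H].
  case: (covCs x) => c cC h; have := H c; by rewrite cC h.
have fclose : forall x y, f x = f y -> d x y <= 2%:R * rstar.
  move=> x y e; have [_ hx] := fP x; have [_ hy] := fP y.
  have e2 : d (f x) y = d y (f y) by rewrite dsym e.
  have := dtri x (f x) y; lra.
set iso := isolated0 d G1 G2 rstar.
set VV := V0 G1 G2.
have adjsym : forall W x y, adj d G1 G2 rstar W x y -> adj d G1 G2 rstar W y x.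
  move=> W x y /and4P[xW yW gr dxy]; apply/and4P; split => //.
    by case/orP: gr => /andP[-> ->]; rewrite ?orbT.
  by rewrite dsym.
have adj_noniso : forall x y, adj d G1 G2 rstar VV x y -> x \notin iso.
  move=> x y a; rewrite inE negb_and; apply/orP; right.
  rewrite /deg -lt0n card_gt0; apply/set0Pn; exists y; by rewrite inE.
have sameG : forall x y, x \in G1 -> y \in G1 -> x != y -> f x = f y -> False.
  move=> x y x1 y1 nxy e; have := sep1 x y x1 y1 nxy; have := fclose x y e; lra.
have sameG2 : forall x y, x \in G2 -> y \in G2 -> x != y -> f x = f y -> False.
  move=> x y x1 y1 nxy e; have := sep2 x y x1 y1 nxy; have := fclose x y e; lra.
have key : forall x y, x \in VV -> y \in VV -> x != y -> f x = f y -> x \notin iso.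
  move=> x y xV yV nxy e.
  have dxy := fclose x y e.
  have d3 : d x y <= 3%:R * rstar by lra.
  case/setUP: (xV) => [x1|x2]; case/setUP: (yV) => [y1|y2].
  - by case: (sameG x y x1 y1 nxy e).
  - apply: (adj_noniso x y); apply/and4P; split => //; by rewrite x1 y2.
  - apply: (adj_noniso x y); apply/and4P; split => //; by rewrite x2 y1 orbT.
  - by case: (sameG2 x y x2 y2 nxy e).
have bound : forall A : {set T}, A \subset VV ->
    (forall x y, x \in A -> y \in A -> x \notin iso -> y \notin iso -> x != y ->
       f x = f y -> False) -> (#|A| <= k1 + k2)%N.
  move=> A AV H.
  have inj : {in A &, injective f}.
    move=> x y xA yA e; case: (eqVneq x y) => // nxy.
    have xV := subsetP AV x xA; have yV := subsetP AV y yA.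
    have nx := key x y xV yV nxy e.
    have ny := key y x yV xV (contra_neq (@esym _ _ _) nxy) (esym e).
    by case: (H x y xA yA nx ny nxy e).
  rewrite -(card_in_imset inj).
  apply: (leq_trans (subset_leq_card (_ : _ \subset Cs))).
    by apply/subsetP => y /imsetP[x _ ->]; case: (fP x).
  rewrite cardC; exact: leq_add.
have isoV : iso \subset VV by apply/subsetP => x; rewrite inE => /andP[].
have C0iso : phase1_C d rstar s \subset iso.
  apply: foldl_sub; first exact: sub0set.
  by apply/allP => x; rewrite (perm_mem perm_s) mem_enum.
have V1iso : forall x, x \in phase1_V d G1 G2 rstar -> x \in iso -> False.
  by move=> x; rewrite inE => /andP[/negP].
have baseI : forall Gx : {set T}, Gx \subset VV ->
   (forall x y, x \in Gx -> y \in Gx -> x != y -> f x = f y -> False) ->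
   (#|phase1_V d G1 G2 rstar :&: Gx| + #|phase1_C d rstar s| <= k1 + k2)%N.
  move=> Gx GxV Hs.
  apply: (leq_trans (leq_add (leqnn _) (subset_leq_card C0iso))).
  rewrite -card_disjU; last by move=> x; rewrite inE => /andP[/V1iso].
  apply: bound.
    rewrite subUset isoV andbT; apply: subset_trans GxV; exact: subsetIr.
  move=> x y /setUP[/setIP[_ xG]|xi]; last by rewrite xi.
  move=> /setUP[/setIP[_ yG]|yi]; last by rewrite yi.
  move=> _ _; exact: Hs.
have base3 : forall Ga Gb : {set T}, Ga \subset VV -> Gb \subset VV ->
   (forall x y, x \in Gb -> y \in Gb -> x != y -> f x = f y -> False) ->
   (forall x, x \in Ga -> x \in Gb -> False) ->
   (#|Gb| + #|iso :&: Ga| <= k1 + k2)%N.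
  move=> Ga Gb GaV GbV Hs dis.
  rewrite -card_disjU; last by move=> x xb /setIP[_ xa]; exact: dis xa xb.
  apply: bound.
    by rewrite subUset GbV; apply: subset_trans isoV; exact: subsetIl.
  move=> x y /setUP[xG|/setIP[xi _]]; last by rewrite xi.
  move=> /setUP[yG|/setIP[yi _]]; last by rewrite yi.
  move=> _ _; exact: Hs.
have G1V : G1 \subset VV by apply/subsetP => x; rewrite inE => ->.
have G2V : G2 \subset VV by apply/subsetP => x; rewrite inE orbC => ->.
have B1 := baseI G1 G1V sameG.
have B2 := baseI G2 G2V sameG2.
have B31 := base3 G1 G2 G1V G2V sameG2 G12.
have B32 := base3 G2 G1 G2V G1V sameG (fun x a b => G12 x b a).
have C0S1 : (#|phase1_C d rstar s :&: S1| <= #|iso :&: G1|)%N.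
  apply: subset_leq_card; apply/subsetP => x /setIP[xC xS].
  have xi := subsetP C0iso x xC; apply/setIP; split => //.
  move: (subsetP isoV x xi); rewrite inE => /orP[//|x2].
  by have := subsetP G2S2 x x2; rewrite inS2 xS.
have C0S2 : (#|phase1_C d rstar s :&: S2| <= #|iso :&: G2|)%N.
  apply: subset_leq_card; apply/subsetP => x /setIP[xC xS].
  have xi := subsetP C0iso x xC; apply/setIP; split => //.
  move: (subsetP isoV x xi); rewrite inE => /orP[x1|//].
  by have := subsetP G1S1 x x1; rewrite -[x \in S1]negbK -inS2 xS.
suff [[I1 I2] I3] : ((#|V :&: G1| + #|C| <= k1 + k2)%N /\ (#|V :&: G2| + #|C| <= k1 + k2)%N) /\
   ((#|C :&: S1| <= k1)%N /\ (#|C :&: S2| <= k2)%N).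
  split; [split| |exact: I3]; clear -I1 I2; lia.
elim: reach => [|C1 V1 C' V' _ [[IH1 IH2] _] _ st nret].
  split; first by split.
  split; [clear -C0S1 B31 k2G2 | clear -C0S2 B32 k1G1]; lia.
have [a [b [aV [bV [naV' [nbV' [sV' [eC gr]]]]]]]] : exists a b, a \in V1 /\ b \in V1 /\ a \notin V' /\ b \notin V'
   /\ V' \subset V1 /\ C' = a |: C1 /\ ((a \in G1) && (b \in G2) || (a \in G2) && (b \in G1)).
  case: st.
  - move=> p q _ /and4P[pV qV gr _]; exists p, q.
    split => //; split => //; split; [by rewrite !inE eqxx andbF|].
    split; [by rewrite !inE eqxx|].
    split; [by apply/subsetP => x; rewrite !inE => /andP[_ /andP[_ ->]]|].
    by split.
  - move=> i [v vV dv] iV imax.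
    have [j hj] := cards1P dv.
    have avj : adj d G1 G2 rstar V1 v j.
      have : j \in nbhd d G1 G2 rstar V1 v by rewrite hj inE.
      by rewrite inE.
    have : (0 < #|N1 d G1 G2 rstar V1 j|)%N.
      rewrite card_gt0; apply/set0Pn; exists v; rewrite !inE adjsym //.
    have jV : j \in V1 by case/and4P: avj.
    move=> /leq_trans /(_ (imax j jV)); rewrite card_gt0 => /set0Pn[y yN].
    have := yN; rewrite !inE => /andP[/and4P[_ yV gr _] _].
    exists i, y.
    split => //; split => //; split; [by rewrite !inE eqxx|].
    split; [by rewrite in_setD in_setU1 yN orbT|].
    split; [by apply/subsetP => x; rewrite inE => /andP[]|].
    by split.
have cC : (#|C'| <= #|C1|.+1)%N by rewrite eC cardsU1; case: (_ \notin _).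
have [h1 h2] : (#|V' :&: G1| < #|V1 :&: G1|)%N /\ (#|V' :&: G2| < #|V1 :&: G2|)%N.
  case/orP: gr => /andP[ag bg].
    split; [exact: (shrink sV' aV ag naV') | exact: (shrink sV' bV bg nbV')].
  split; [exact: (shrink sV' bV bg nbV') | exact: (shrink sV' aV ag naV')].
have J1 : (#|V' :&: G1| + #|C'| <= k1 + k2)%N by clear -IH1 cC h1; lia.
have J2 : (#|V' :&: G2| + #|C'| <= k1 + k2)%N by clear -IH2 cC h2; lia.
split; first by split.
have cc := cardC C'.
move: nret; rewrite /returns => nret.
split.
  rewrite leqNgt; apply/negP => H; apply: nret; right; clear -J2 cc H; lia.
rewrite leqNgt; apply/negP => H; apply: nret; left; clear -J1 cc H; lia.
Qed.
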